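(* Let $n\ge2$ and let $x=(x(1),\ldots,x(n))$ be a sequence of integers, and $i\in[n]$. (a) If $x'$ is obtained from $x$ by deleting the entry $x(i)$, then $\boldsymbol{b}(x')$ is obtained from $\boldsymbol{b}(x)$ by deleting the entry $\boldsymbol{b}(x)(i)$ or the entry $\boldsymbol{b}(x)(i+1)$ (the latter only when $i<n$). (b) If $x''$ is obtained from $x$ by replacing the entry $x(i)$ with another value, then one of the following holds: (1) $(\boldsymbol{b}(x)(i),\boldsymbol{b}(x)(i+1))=(1,0)$ and $(\boldsymbol{b}(x'')(i),\boldsymbol{b}(x'')(i+1))=(0,1)$, or vice versa, with all other entries equal; (2) $\boldsymbol{b}(x'')$ differs from $\boldsymbol{b}(x)$ in exactly one of the entries $i$, $i+1$; (3) $\boldsymbol{b}(x'')=\boldsymbol{b}(x)$.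
   Context: For an integer sequence $x$ of length $N$, $\boldsymbol{b}(x)\in\{0,1\}^N$ is defined by $\boldsymbol{b}(x)(1)=1$ and, for $2\le i\le N$, $\boldsymbol{b}(x)(i)=1$ if $x(i)>x(i-1)$ and $\boldsymbol{b}(x)(i)=0$ otherwise. Entries with index $N+1$ are disregarded. *)

(* Defs.v *)
From mathcomp Require Import all_boot all_order all_algebra.
Set Implicit Arguments. Unset Strict Implicit. Unset Printing Implicit Defensive.
Import Order.TTheory GRing.Theory Num.Theory.

(* Integer sequences are [seq int]; entries are indexed 1-based in the
   paper, 0-based by [nth]. *)

Definition bvec (x : seq int) : seq bool :=
  mkseq (fun k => if k is k'.+1 then (nth (0:int) x k' < nth (0:int) x k)%R else true)
        (size x).

(* 1-based entry k of b(x); entries with index outside [1, size x]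
   (in particular index N+1) read as [false] on both sides, i.e. they are
   disregarded. *)
Definition bent (x : seq int) (k : nat) : bool := nth false (bvec x) k.-1.

Definition delnth {T : Type} (j : nat) (s : seq T) : seq T :=
  take j.-1 s ++ drop j s.

(* Main.v *)
Require Import Defs.
From mathcomp Require Import all_boot all_order all_algebra zify.
Import Order.TTheory GRing.Theory Num.Theory.

Lemma bentE x k : bent x k.+1 = (k < size x) && ((k == 0) || (nth 0 x k.-1 < nth 0 x k)%R).
Proof.
rewrite /bent /bvec /=.
case: (ltnP k (size x)) => hk.
  rewrite nth_mkseq //=; by case: k hk.
by rewrite nth_default ?size_mkseq.
Qed.

Lemma nth_del {T} (d : T) i s j : 0 < i -> i.-1 <= size s ->
  nth d (delnth i s) j = if j < i.-1 then nth d s j else nth d s j.+1.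
Proof.
move=> h0 hi; rewrite /delnth nth_cat size_take.
have -> : (if i.-1 < size s then i.-1 else size s) = i.-1.
  by case: ltnP => // h; apply/eqP; rewrite eqn_leq h hi.
case: ifP => hj; first by rewrite nth_take.
rewrite nth_drop; congr nth; lia.
Qed.

Lemma size_del {T} i (s : seq T) : 1 <= i <= size s -> size (delnth i s) = (size s).-1.
Proof. move=> h; rewrite /delnth size_cat size_take size_drop; case: ifP; lia. Qed.


Lemma delA n x i : 2 <= n -> size x = n -> 1 <= i <= n ->
  (forall j, j < n.-1 -> j != i.-1 ->
    bent (delnth i x) j.+1 = if j < i.-1 then bent x j.+1 else bent x j.+2) /\
  (i < n -> bent (delnth i x) i = bent x i \/ bent (delnth i x) i = bent x i.+1).
Proof.
move=> hn hs hi.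
have hsd : size (delnth i x) = n.-1 by rewrite size_del hs.
split.
  move=> j hj hji.
  rewrite !bentE hsd !nth_del ?hs; try lia.
  case: (ltnP j i.-1) => hj1.
    have -> : j.-1 < i.-1 by lia.
    have -> : j < n by lia. by rewrite hj.
  have -> : (j.-1 < i.-1) = false by move/eqP: hji => ?; apply/negbTE; rewrite -leqNgt; lia.
  have -> : (j == 0) = false by lia.
  have -> : (j.+1 == 0) = false by [].
  have -> : j.+1 < n by lia.
  have hj0 : 0 < j by move/eqP: hji => ?; lia.
  by rewrite /= hj prednK.
move=> hin.
case: i hi hin hsd => [|i] hi hin hsd; first lia.
rewrite !bentE hsd !nth_del ?hs; try lia.
have -> : i < n.-1 by lia.
have -> : i < n by lia.
have -> : i.+1 < n by lia.
rewrite /= !ltnn; clear hsd.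
case: i hi hin => [|i] hi hin /=; first by left.
rewrite ltnSn.
set a := nth 0%R x i; set b := nth 0%R x i.+1; set c := nth 0%R x i.+2.
case: (ltP a b); case: (ltP b c); case: (ltP a c); move=> *; (by left) || (by right) || lia.
Qed.

Lemma setA n x i v : size x = n -> 1 <= i <= n ->
  forall k, k.+1 != i -> k.+1 != i.+1 ->
  bent (set_nth 0%R x i.-1 v) k.+1 = bent x k.+1.
Proof.
move=> hs hi k h1 h2.
have hsz : size (set_nth 0%R x i.-1 v) = n.
  by rewrite size_set_nth hs; apply/maxn_idPr; lia.
rewrite !bentE hsz hs !nth_set_nth /=.
have -> : (k == i.-1) = false by apply/negbTE; move/eqP: h1 => ?; apply/eqP; lia.
case: k h1 h2 => [|k] h1 h2 //=.
have -> : (k == i.-1) = false by apply/negbTE; move/eqP: h2 => ?; apply/eqP; lia.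
by [].
Qed.

Lemma setLast n x i v : size x = n -> 1 <= i <= n ->
  bent (set_nth 0%R x i.-1 v) n.+1 = false /\ bent x n.+1 = false.
Proof.
move=> hs hi.
have hsz : size (set_nth 0%R x i.-1 v) = n.
  by rewrite size_set_nth hs; apply/maxn_idPr; lia.
by rewrite !bentE hsz hs ltnn.
Qed.

Theorem proposition1 (n : nat) (x : seq int) (i : nat) :
  2 <= n -> size x = n -> 1 <= i <= n ->
  (* (a) deletion *)
  (bvec (delnth i x) = delnth i (bvec x) \/
     (i < n /\ bvec (delnth i x) = delnth i.+1 (bvec x)))
  /\
  (* (b) substitution *)
  (forall v : int, v != nth (0:int) x i.-1 ->
     let x'' := set_nth (0:int) x i.-1 v in
     (* (1) *)
     (i < n /\
        (((bent x i, bent x i.+1) = (true, false) /\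
          (bent x'' i, bent x'' i.+1) = (false, true)) \/
         ((bent x i, bent x i.+1) = (false, true) /\
          (bent x'' i, bent x'' i.+1) = (true, false))) /\
        (forall k, 1 <= k <= n -> k != i -> k != i.+1 ->
           bent x'' k = bent x k))
     \/
     (* (2) *)
     (exists j, (j = i \/ (j = i.+1 /\ i < n)) /\
        forall k, 1 <= k <= n -> (bent x'' k != bent x k <-> k = j))
     \/
     (* (3) *)
     bvec x'' = bvec x).
Proof.
move=> hn hs hi.
have hsb : forall y, size (bvec y) = size y by move=> y; rewrite size_mkseq.
split.
  have [hA hB] := @delA _ _ _ hn hs hi.
  have hsd0 : size (bvec (delnth i x)) = n.-1 by rewrite hsb size_del hs.
  have hsd : size (bvec (delnth i x)) = n.-1 by rewrite hsb size_del hs.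
  have Hr : i < n -> bent (delnth i x) i = bent x i ->
      bvec (delnth i x) = delnth i.+1 (bvec x).
    move=> hin he; apply: (eq_from_nth (x0 := false)).
      by rewrite hsd size_del hsb hs //; lia.
    rewrite hsd => j hj.
    have h0 : 0 < i by lia.
    rewrite nth_del //; last by rewrite hsb hs; lia.
    case: (j =P i.-1) => [->|/eqP hji].
      have -> : i.-1 < i.+1.-1 by rewrite /=; lia.
      exact: he.
    have := hA j hj hji; rewrite /bent /= => ->.
    case: ltnP => h1; case: ltnP => h2 //; lia.
  have Hl : (i < n -> bent (delnth i x) i = bent x i.+1) ->
      bvec (delnth i x) = delnth i (bvec x).
    move=> he; apply: (eq_from_nth (x0 := false)).
      by rewrite hsd size_del hsb hs //; lia.
    rewrite hsd => j hj.
    have h0 : 0 < i by lia.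
    rewrite nth_del //; last by rewrite hsb hs; lia.
    case: (j =P i.-1) => [hji|/eqP hji].
      rewrite hji ltnn.
      have hin : i < n by lia.
      have := he hin; rewrite /bent prednK //.
    by have := hA j hj hji; rewrite /bent /= => ->.
  case: (ltnP i n) => hin.
    case: (hB hin) => he; first by right; split => //; apply: Hr.
    by left; apply: Hl.
  by left; apply: Hl => h; lia.
move=> v hv x''.
have [hL1 hL2] := @setLast _ _ _ v hs hi.
have hO := @setA _ _ _ v hs hi.
have hO' : forall k, 1 <= k -> k != i -> k != i.+1 -> bent x'' k = bent x k.
  by case=> [|k] // _; apply: hO.
case hp : (bent x'' i != bent x i); case hq : (bent x'' i.+1 != bent x i.+1).
-
  have hin : i < n.
    rewrite ltn_neqAle; apply/andP; split; last lia.
    by apply/eqP => hni; move: hq; rewrite hni hL1 hL2.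
  left; split => //; split; last by move=> k hk; apply: hO'; lia.
  move: hp hq; rewrite /x''.
  case: i hi hin {hO hO' x'' hv hL1 hL2} => [|i] hi hin; first lia.
  rewrite !bentE !size_set_nth !nth_set_nth /= !eqxx.
  case: i hi hin => [|i] hi hin /=.
    have h1 : 0 < maxn 1 (size x) by lia.
    have h2 : 0 < size x by lia.
    by rewrite h1 h2.
  rewrite hs.
  have -> : (i == i.+1) = false by lia.
  have -> : (i.+2 == i.+1) = false by lia.
  have -> : i.+1 < n by lia.
  have -> : i.+2 < n by [].
  have -> : i.+1 < maxn i.+2 n by lia.
  have -> : i.+2 < maxn i.+2 n by lia.
  rewrite /=.
  set a := nth 0%R x i; set b := nth 0%R x i.+1; set c := nth 0%R x i.+2.
  case: (ltP a b); case: (ltP b c); case: (ltP a v); case: (ltP v c); move=> * //=;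
    try (by left); try (by right); lia.
- right; left; exists i; split; first by left.
  move=> k hk; split; last by move=> ->; rewrite hp.
  move=> hne; apply/eqP; apply/negP => hki.
  case: (k =P i.+1) => [hk1|/eqP hk1].
    by move: hne; rewrite hk1; move/negbFE: hq => /eqP ->; rewrite eqxx.
  by move: hne; rewrite hO' ?eqxx //; lia.
- have hin : i < n.
    rewrite ltn_neqAle; apply/andP; split; last lia.
    by apply/eqP => hni; move: hq; rewrite hni hL1 hL2.
  right; left; exists i.+1; split; first by right.
  move=> k hk; split; last by move=> ->; rewrite hq.
  move=> hne; apply/eqP; apply/negP => hki.
  case: (k =P i) => [hk1|/eqP hk1].
    by move: hne; rewrite hk1; move/negbFE: hp => /eqP ->; rewrite eqxx.
  by move: hne; rewrite hO' ?eqxx //; lia.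
- right; right; apply: (eq_from_nth (x0 := false)).
    by rewrite !hsb size_set_nth hs; apply/maxn_idPr; lia.
  move=> j _; change (bent x'' j.+1 = bent x j.+1).
  case: (j.+1 =P i) => [->|/eqP h1]; first by apply/eqP; move/negbFE: hp.
  case: (j.+1 =P i.+1) => [->|/eqP h2]; first by apply/eqP; move/negbFE: hq.
  by apply: hO.
Qed.
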